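(* Assume (A1) and (A3). Then for every $\bar\alpha\in\{0,1\}^m$ and every $i\in\{1,\dots,m\}$, the nonstandard derivative $[D^{NS}J(\bar\alpha)]_i$ exists (the defining one-sided limit exists), is unique and finite, and $$[D^{NS}J(\bar\alpha)]_i=\int_0^T\Big(\big(f(x^{\bar\alpha}(t),\bar\alpha+\mathbf 1_i)-f(x^{\bar\alpha}(t),\bar\alpha)\big)^\top\lambda^{\bar\alpha}(t)+r(x^{\bar\alpha}(t),\bar\alpha+\mathbf 1_i)-r(x^{\bar\alpha}(t),\bar\alpha)\Big)\,dt$$ if $\bar\alpha_i=0$, and $$[D^{NS}J(\bar\alpha)]_i=\int_0^T\Big(\big(f(x^{\bar\alpha}(t),\bar\alpha)-f(x^{\bar\alpha}(t),\bar\alpha-\mathbf 1_i)\big)^\top\lambda^{\bar\alpha}(t)+r(x^{\bar\alpha}(t),\bar\alpha)-r(x^{\bar\alpha}(t),\bar\alpha-\mathbf 1_i)\Big)\,dt$$ if $\bar\alpha_i=1$.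
   Context: Fix integers $n,m\ge 1$, a horizon $T>0$, a set $\mathcal X\subseteq\mathbb R^n$ and an initial state $\mathbf x\in\mathcal X$. Let $f:\mathbb R^n\times\mathbb R^m\to\mathbb R^n$, $r:\mathbb R^n\times\mathbb R^m\to\mathbb R$, $q:\mathbb R^n\to\mathbb R$. For $\beta\in\{0,1\}^m$, $x^\beta:[0,T]\to\mathbb R^n$ is the solution of $\dot x(t)=f(x(t),\beta)$, $x(0)=\mathbf x$ (assumed to exist uniquely on $[0,T]$). For a function $z:[0,T]\to\mathbb R^n$ in $L^2$ with a well-defined value $z(T)$ and $\beta\in\mathbb R^m$, set $\mathcal J(z,\beta)=\int_0^T r(z(t),\beta)\,dt+q(z(T))$; the payoff is $J(\beta)=\mathcal J(x^\beta,\beta)$. $\mathbf 1_i$ denotes the $i$-th standard basis vector of $\mathbb R^m$. (A1): for each $\alpha\in\{0,1\}^m$, $f(\cdot,\alpha)$ is twice differentiable with continuous second derivative and globally Lipschitz on $\mathcal X$. (A3): for each $\alpha\in\{0,1\}^m$, $r(\cdot,\alpha)$ and $q$ are continuously differentiable. Adjoint: for $\bar\alpha\in\{0,1\}^m$, $\lambda^{\bar\alpha}:[0,T]\to\mathbb R^n$ solves $-\dot\lambda(t)=\frac{\partial f}{\partial x}(x^{\bar\alpha}(t),\bar\alpha)^\top\lambda(t)+\frac{\partial r}{\partial x}(x^{\bar\alpha}(t),\bar\alpha)^\top$, $\lambda(T)=\frac{\partial q}{\partial x}(x^{\bar\alpha}(T))^\top$ (i.e. $-\dot\lambda=\partial_x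 H^\top$ with Hamiltonian $H(x,\lambda,\alpha)=\lambda^\top f(x,\alpha)+r(x,\alpha)$). $\epsilon$-variational system: for $\bar\alpha,\alpha\in\{0,1\}^m$ and $\epsilon\in[0,1]$, $x^{\epsilon(\bar\alpha,\alpha)}$ is the solution of $\dot x(t)=(1-\epsilon)f(x(t),\bar\alpha)+\epsilon f(x(t),\alpha)$, $x(0)=\mathbf x$, and $\mathcal J^{\epsilon(\bar\alpha,\alpha)}(z):=(1-\epsilon)\mathcal J(z,\bar\alpha)+\epsilon\mathcal J(z,\alpha)$. Nonstandard derivative: $[D^{NS}J(\bar\alpha)]_i:=\lim_{\epsilon\to0^+}\frac1\epsilon\big[\mathcal J^{\epsilon(\bar\alpha,\bar\alpha+\mathbf 1_i)}(x^{\epsilon(\bar\alpha,\bar\alpha+\mathbf 1_i)})-\mathcal J(x^{\bar\alpha},\bar\alpha)\big]$ if $\bar\alpha_i=0$, and $[D^{NS}J(\bar\alpha)]_i:=\lim_{\epsilon\to0^+}\frac1\epsilon\big[\mathcal J(x^{\bar\alpha},\bar\alpha)-\mathcal J^{\epsilon(\bar\alpha,\bar\alpha-\mathbf 1_i)}(x^{\epsilon(\bar\alpha,\bar\alpha-\mathbf 1_i)})\big]$ if $\bar\alpha_i=1$. *)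

(* Defs.v *)
From Stdlib Require Import Reals ClassicalEpsilon.
From mathcomp Require Import ssreflect ssrfun ssrbool eqtype ssrnat seq fintype bigop.
Set Implicit Arguments. Unset Strict Implicit.
Open Scope R_scope.

Definition vec (n : nat) := 'I_n -> R.

Definition vadd n (u v : vec n) : vec n := fun k => u k + v k.
Definition vsub n (u v : vec n) : vec n := fun k => u k - v k.
Definition vscale n (c : R) (u : vec n) : vec n := fun k => c * u k.
Definition dot n (u v : vec n) : R := \big[Rplus/0%R]_(k < n) (u k * v k).
Definition vnorm n (u : vec n) : R := sqrt (dot u u).

Definition ebasis m (i : 'I_m) : vec m := fun j => if j == i then 1 else 0.
Definition bctrl m (a : 'I_m -> bool) : vec m := fun j => if a j then 1 else 0.

Definition fdiff n (g : vec n -> R) (x grad : vec n) : Prop :=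
  forall eps, 0 < eps -> exists delta, 0 < delta /\
    forall h : vec n, vnorm h < delta ->
      Rabs (g (vadd x h) - g x - dot grad h) <= eps * vnorm h.

Definition vcont n (g : vec n -> R) (x : vec n) : Prop :=
  forall eps, 0 < eps -> exists delta, 0 < delta /\
    forall y : vec n, vnorm (vsub y x) < delta -> Rabs (g y - g x) < eps.

Definition lipschitz_on n (X : vec n -> Prop) (F : vec n -> vec n) : Prop :=
  exists K, forall y z, X y -> X z -> vnorm (vsub (F y) (F z)) <= K * vnorm (vsub y z).

Definition cont_on (a b : R) (g : R -> R) : Prop :=
  forall t, a <= t <= b -> limit1_in g (fun s => a <= s <= b) (g t) t.

Definition ode_sol n (T : R) (F : vec n -> vec n) (z0 : vec n) (z : R -> vec n) : Prop :=
  (forall k, z 0 k = z0 k) /\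
  (forall k, cont_on 0 T (fun t => z t k)) /\
  (forall t, 0 < t < T -> forall k, derivable_pt_lim (fun s => z s k) t (F (z t) k)).

(* Riemann integral over [a,b] (value when integrable; unspecified otherwise) *)
Definition integ (g : R -> R) (a b : R) : R :=
  epsilon (inhabits 0) (fun I => exists pr : Riemann_integrable g a b, RiemannInt pr = I).

Definition Jfun n m (T : R) (r : vec n -> vec m -> R) (q : vec n -> R)
  (z : R -> vec n) (beta : vec m) : R :=
  integ (fun t => r (z t) beta) 0 T + q (z T).

(* F : R^n -> R^n is twice differentiable with continuous second derivative,
   with (Frechet) derivative DF (DF x k = gradient of the k-th component)
   and second derivative D2F (D2F x k j = gradient of x |-> DF x k j) *)
Definition C2_with n (F : vec n -> vec n) (DF : vec n -> 'I_n -> vec n)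
  (D2F : vec n -> 'I_n -> 'I_n -> vec n) : Prop :=
  (forall x k, fdiff (fun y => F y k) x (DF x k)) /\
  (forall x k j, fdiff (fun y => DF y k j) x (D2F x k j)) /\
  (forall x k j l, vcont (fun y => D2F y k j l) x).

Definition C1_with n (g : vec n -> R) (Dg : vec n -> vec n) : Prop :=
  (forall x, fdiff g x (Dg x)) /\ (forall x k, vcont (fun y => Dg y k) x).

(* adjoint: -lam' = (df/dx)(z(t))^T lam + (dr/dx)(z(t))^T, lam(T) = (dq/dx)(z(T))^T,
   with z = x^abar; DFa, Dra are the derivatives of f(.,abar), r(.,abar) *)
Definition adjoint_sol n (T : R) (DFa : vec n -> 'I_n -> vec n) (Dra : vec n -> vec n)
  (Dq : vec n -> vec n) (z lam : R -> vec n) : Prop :=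
  (forall k, lam T k = Dq (z T) k) /\
  (forall k, cont_on 0 T (fun t => lam t k)) /\
  (forall t, 0 < t < T -> forall k,
     derivable_pt_lim (fun s => lam s k) t
       (- (\big[Rplus/0%R]_(j < n) (DFa (z t) j k * lam t j) + Dra (z t) k))).

(* Main.v *)
From HB Require Import structures.
Require Import Defs.
From Stdlib Require Import Reals ClassicalEpsilon FunctionalExtensionality Lra.
From mathcomp Require Import ssreflect ssrfun ssrbool eqtype ssrnat seq fintype bigop.
From Coquelicot Require Import Coquelicot.
Open Scope R_scope.
Set Implicit Arguments. Unset Strict Implicit.


Lemma Rplus_A : associative Rplus. Proof. move=>*; ring. Qed.
Lemma Rmult_A : associative Rmult. Proof. move=>*; ring. Qed.
HB.instance Definition _ := Monoid.isComLaw.Build R 0 Rplus Rplus_A Rplus_comm Rplus_0_l.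
HB.instance Definition _ := Monoid.isComLaw.Build R 1 Rmult Rmult_A Rmult_comm Rmult_1_l.
HB.instance Definition _ := Monoid.isMulLaw.Build R 0 Rmult Rmult_0_l Rmult_0_r.
HB.instance Definition _ := Monoid.isAddLaw.Build R Rmult Rplus Rmult_plus_distr_r Rmult_plus_distr_l.



Definition N1 n (u : vec n) : R := \big[Rplus/0]_(k < n) Rabs (u k).

Lemma sum_ge0 n (F : 'I_n -> R) : (forall k, 0 <= F k) -> 0 <= \big[Rplus/0]_(k<n) F k.
Proof. move=> H; apply: big_ind => //; [lra | move=>*; lra]. Qed.

Lemma sum_le n (F G : 'I_n -> R) : (forall k, F k <= G k) ->
  \big[Rplus/0]_(k<n) F k <= \big[Rplus/0]_(k<n) G k.
Proof. move=> H; apply: big_ind2 => //; [lra | move=>*; lra]. Qed.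

Lemma sum_abs n (F : 'I_n -> R) : Rabs (\big[Rplus/0]_(k<n) F k) <= \big[Rplus/0]_(k<n) Rabs (F k).
Proof.
apply: (big_ind2 (fun x y => Rabs x <= y)) => //.
- rewrite Rabs_R0; lra.
- move=> x1 x2 y1 y2 H1 H2. eapply Rle_trans; [apply Rabs_triang| lra].
- move=> *; lra.
Qed.

Lemma sum_const n c : \big[Rplus/0]_(k<n) c = INR n * c.
Proof.
elim: n => [|n IH]; first by rewrite big_ord0 /=; ring.
rewrite S_INR big_ord_recr /= IH; ring.
Qed.

Lemma sum_le_const n (F : 'I_n -> R) c : (forall k, F k <= c) -> \big[Rplus/0]_(k<n) F k <= INR n * c.
Proof. move=> H; rewrite -sum_const; exact: sum_le. Qed.

Lemma term_le_sum_seq (I : eqType) (s : seq I) (F : I -> R) k : (forall k, 0 <= F k) -> k \in s -> F k <= \big[Rplus/0]_(j <- s) F j.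
Proof.
move=> H; elim: s => [|a s IH] //; rewrite in_cons big_cons => /orP [/eqP <-|/IH h].
- have : 0 <= \big[Rplus/0]_(j <- s) F j by apply: big_ind => //; [lra|move=>*;lra].
  lra.
- move: (H a); lra.
Qed.

Lemma term_le_sum n (F : 'I_n -> R) k : (forall k, 0 <= F k) -> F k <= \big[Rplus/0]_(j<n) F j.
Proof. move=> H; apply: term_le_sum_seq => //; exact: mem_index_enum. Qed.

Lemma sum_scal n c (F : 'I_n -> R) : c * \big[Rplus/0]_(k<n) F k = \big[Rplus/0]_(k<n) (c * F k).
Proof. by rewrite big_distrr. Qed.

Lemma sum_scal_r n c (F : 'I_n -> R) : (\big[Rplus/0]_(k<n) F k) * c = \big[Rplus/0]_(k<n) (F k * c).
Proof. rewrite Rmult_comm sum_scal; apply: eq_bigr => k _; ring. Qed.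

Lemma sum_plus n (F G : 'I_n -> R) : \big[Rplus/0]_(k<n) (F k + G k) = \big[Rplus/0]_(k<n) F k + \big[Rplus/0]_(k<n) G k.
Proof. by rewrite big_split. Qed.

Lemma sum_minus n (F G : 'I_n -> R) : \big[Rplus/0]_(k<n) (F k - G k) = \big[Rplus/0]_(k<n) F k - \big[Rplus/0]_(k<n) G k.
Proof.
have -> : \big[Rplus/0]_(k<n) (F k - G k) = \big[Rplus/0]_(k<n) (F k + (-1) * G k).
  by apply: eq_bigr => k _; ring.
rewrite sum_plus -sum_scal; ring.
Qed.

Lemma sum_ext n (F G : 'I_n -> R) : (forall k, F k = G k) -> \big[Rplus/0]_(k<n) F k = \big[Rplus/0]_(k<n) G k.
Proof. by move=> H; apply: eq_bigr => k _. Qed.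

Lemma dot_ge0 n (u : vec n) : 0 <= dot u u.
Proof. apply: sum_ge0 => k; nra. Qed.

Lemma vnorm_ge0 n (u : vec n) : 0 <= vnorm u.
Proof. apply: sqrt_pos. Qed.

Lemma vnorm_sq n (u : vec n) : vnorm u * vnorm u = dot u u.
Proof. rewrite /vnorm sqrt_sqrt //; exact: dot_ge0. Qed.

Lemma comp_le_vnorm n (u : vec n) k : Rabs (u k) <= vnorm u.
Proof.
rewrite /vnorm -sqrt_Rsqr_abs; apply: sqrt_le_1_alt.
rewrite /Rsqr /dot. apply: (@term_le_sum n (fun j => u j * u j)) => j; nra.
Qed.

Lemma N1_ge0 n (u : vec n) : 0 <= N1 u.
Proof. apply: sum_ge0 => k; exact: Rabs_pos. Qed.

Lemma vnorm_le_N1 n (u : vec n) : vnorm u <= N1 u.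
Proof.
rewrite /vnorm -(sqrt_Rsqr (N1 u)); last exact: N1_ge0.
apply: sqrt_le_1_alt. rewrite /Rsqr.
have -> : N1 u * N1 u = \big[Rplus/0]_(k<n) (Rabs (u k) * N1 u).
  rewrite {1}/N1 sum_scal_r //.
apply: sum_le => k.
have h1 : Rabs (u k) <= N1 u by apply: (@term_le_sum n (fun j => Rabs (u j))) => j; apply Rabs_pos.
have h2 : u k * u k = Rabs (u k) * Rabs (u k) by rewrite -Rabs_mult Rabs_right //; nra.
rewrite h2; apply Rmult_le_compat_l => //; apply Rabs_pos.
Qed.

Lemma N1_le n (u : vec n) : N1 u <= INR n * vnorm u.
Proof. apply: sum_le_const => k; exact: comp_le_vnorm. Qed.

Lemma vnorm_comp_bound n (u : vec n) c : (forall k, Rabs (u k) <= c) -> vnorm u <= INR n * c.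
Proof. move=> H; eapply Rle_trans; [apply vnorm_le_N1| apply sum_le_const => k; exact: H]. Qed.

Lemma dot_bound n (u v : vec n) B : (forall k, Rabs (u k) <= B) -> Rabs (dot u v) <= B * N1 v.
Proof.
move=> H; eapply Rle_trans; first apply sum_abs.
rewrite /N1 sum_scal; apply: sum_le => k; rewrite Rabs_mult.
apply Rmult_le_compat_r; [apply Rabs_pos| exact: H].
Qed.

Lemma dotC n (u v : vec n) : dot u v = dot v u.
Proof. apply: sum_ext => k; ring. Qed.

Lemma vnorm_scale n c (u : vec n) : vnorm (vscale c u) = Rabs c * vnorm u.
Proof.
rewrite /vnorm /vscale.
have -> : dot (fun k => c * u k) (fun k => c * u k) = (c * c) * dot u u.
  by rewrite /dot sum_scal; apply: sum_ext => k; ring.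
rewrite sqrt_mult; [|nra|exact: dot_ge0].
by rewrite -sqrt_Rsqr_abs. 
Qed.

Lemma dot_sub_l n (u v w : vec n) : dot (vsub u v) w = dot u w - dot v w.
Proof. rewrite /dot -sum_minus; apply: sum_ext => k; rewrite /vsub; ring. Qed.

Lemma vsub_comp n (u v : vec n) k : vsub u v k = u k - v k.
Proof. by []. Qed.

Lemma vadd_sub n (x y : vec n) : vadd x (vsub y x) = y.
Proof. apply: functional_extensionality => k; rewrite /vadd /vsub; ring. Qed.

Lemma vsub_add n (x h : vec n) : vsub (vadd x h) x = h.
Proof. apply: functional_extensionality => k; rewrite /vadd /vsub; ring. Qed.

Lemma vnorm_tri_weak n (y z w : vec n) :
  vnorm (vsub y z) <= INR n * (vnorm (vsub y w) + vnorm (vsub w z)).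
Proof.
apply: vnorm_comp_bound => k; rewrite /vsub.
have h1 := comp_le_vnorm (vsub y w) k; have h2 := comp_le_vnorm (vsub w z) k.
rewrite /vsub in h1 h2.
have -> : y k - z k = (y k - w k) + (w k - z k) by ring.
eapply Rle_trans; [apply Rabs_triang|lra].
Qed.

Lemma vnorm_sub_sym n (y z : vec n) : vnorm (vsub y z) = vnorm (vsub z y).
Proof.
have -> : vsub y z = vscale (-1) (vsub z y).
  apply: functional_extensionality => k; rewrite /vsub /vscale; ring.
rewrite vnorm_scale Rabs_Ropp Rabs_R1; ring.
Qed.

Lemma cont_pt_intro (f : R -> R) x :
  (forall eps, 0 < eps -> exists alp, 0 < alp /\ forall y, Rabs (y - x) < alp -> Rabs (f y - f x) < eps) ->
  continuity_pt f x.
Proof.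
move=> H eps He; have [alp [Ha Hy]] := H eps He; exists alp; split => // y [_ Hy'].
exact: Hy.
Qed.

Lemma cont_pt_elim (f : R -> R) x : continuity_pt f x ->
  forall eps, 0 < eps -> exists alp, 0 < alp /\ forall y, Rabs (y - x) < alp -> Rabs (f y - f x) < eps.
Proof.
move=> H eps He; have [alp [Ha Hy]] := H eps He; exists alp; split => // y Hyx.
case: (Req_dec y x) => [->|Hne]; first by rewrite Rminus_eq_0 Rabs_R0.
apply: (Hy y); split => //; split => //; by apply not_eq_sym.
Qed.

Lemma fin_delta n (P : 'I_n -> R -> Prop) :
  (forall k a a', 0 < a' <= a -> P k a -> P k a') ->
  (forall k, exists a, 0 < a /\ P k a) -> exists a, 0 < a /\ forall k, P k a.
Proof.
move=> Hm H.
have H' : forall k, {a | 0 < a /\ P k a} by move=> k; apply: constructive_indefinite_description; exact: H.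
pose d k := proj1_sig (H' k).
exists (\big[Rmin/1]_(k<n) d k); split.
- apply: big_ind => //; first lra. move=> x y hx hy; exact: Rmin_pos.
  move=> k _; exact: (proj1 (proj2_sig (H' k))).
- move=> k; apply: (Hm k (d k)); last exact: (proj2 (proj2_sig (H' k))).
  split.
  + apply: big_ind => //; first lra. move=> x y hx hy; exact: Rmin_pos.
    move=> j _; exact: (proj1 (proj2_sig (H' j))).
  + have : forall (s : seq 'I_n), k \in s -> \big[Rmin/1]_(j <- s) d j <= d k.
      elim => [|a s IH] //; rewrite in_cons big_cons => /orP [/eqP <-|/IH h].
      * exact: Rmin_l.
      * eapply Rle_trans; [apply Rmin_r|exact h].
    move=> /(_ (index_enum 'I_n)); apply; exact: mem_index_enum.
Qed.



Definition clamp a b t := Rmax a (Rmin b t).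

Lemma clamp_in a b t : a <= b -> a <= clamp a b t <= b.
Proof. rewrite /clamp /Rmax /Rmin; repeat case: Rle_dec; lra. Qed.

Lemma clamp_id a b t : a <= t <= b -> clamp a b t = t.
Proof. rewrite /clamp /Rmax /Rmin; repeat case: Rle_dec; lra. Qed.

Lemma clamp_lip a b x y : a <= b -> Rabs (clamp a b y - clamp a b x) <= Rabs (y - x).
Proof. move=> hab; rewrite /clamp /Rmax /Rmin; repeat case: Rle_dec; split_Rabs; lra. Qed.

Lemma cont_on_clamp a b g : a <= b -> cont_on a b g ->
  forall x, continuity_pt (fun t => g (clamp a b t)) x.
Proof.
move=> hab H x; apply: cont_pt_intro => eps He.
have [alp [Ha Hy]] := H _ (clamp_in x hab) eps He.
exists alp; split => // y Hyx.
have := Hy (clamp a b y) (conj (clamp_in y hab) _).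
apply. simpl. rewrite /Rdist. eapply Rle_lt_trans; [apply clamp_lip => //| exact Hyx].
Qed.

Lemma INR_lt n : INR n < INR n + 1. Proof. lra. Qed.
Lemma INR_ge0 n : 0 <= INR n. Proof. apply pos_INR. Qed.

Lemma vec_cont n (g : R -> vec n) t : (forall k, continuity_pt (fun s => g s k) t) ->
  forall eps, 0 < eps -> exists eta, 0 < eta /\ forall s, Rabs (s - t) < eta -> vnorm (vsub (g s) (g t)) < eps.
Proof.
move=> H eps He.
have hn := INR_ge0 n.
have he' : 0 < eps / (INR n + 1) by apply Rdiv_lt_0_compat; lra.
have [a [Ha Hk]] := @fin_delta n (fun k a => forall s, Rabs (s - t) < a -> Rabs (g s k - g t k) < eps / (INR n + 1))
  ltac:(move=> k a a' ha hP s hs; apply hP; lra)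
  ltac:(move=> k; exact: cont_pt_elim).
exists a; split => // s hs.
eapply Rle_lt_trans; first apply: (vnorm_comp_bound (c := eps / (INR n + 1))) => k; first by rewrite /vsub; left; exact: Hk.
have -> : INR n * (eps / (INR n + 1)) = eps * (INR n / (INR n + 1)) by field; lra.
have : INR n / (INR n + 1) < 1 by apply (Rmult_lt_reg_r (INR n + 1)); [lra|]; field_simplify; lra.
move=> h; nra.
Qed.

Lemma comp_cont n (G : vec n -> R) (g : R -> vec n) t : vcont G (g t) ->
  (forall k, continuity_pt (fun s => g s k) t) -> continuity_pt (fun s => G (g s)) t.
Proof.
move=> HG Hg; apply: cont_pt_intro => eps He.
have [d [Hd HGd]] := HG eps He.
have [eta [He' Hs]] := vec_cont Hg Hd.
exists eta; split => // s hs; exact: HGd (Hs _ hs).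
Qed.

Lemma curve_unif n (G : vec n -> R) (g : R -> vec n) T :
  (forall y, vcont G y) -> (forall t k, continuity_pt (fun s => g s k) t) ->
  forall eps, 0 < eps -> exists rho, 0 < rho /\ forall s y, 0 <= s <= T ->
     vnorm (vsub y (g s)) < rho -> Rabs (G y - G (g s)) < eps.
Proof.
move=> HG Hg eps He.
have hn := INR_ge0 n.
have he2 : 0 < eps / 2 by lra.
have Hrho : forall t, {r | 0 < r /\ forall y, vnorm (vsub y (g t)) < r -> Rabs (G y - G (g t)) < eps / 2}.
  move=> t; apply: constructive_indefinite_description; exact: HG.
pose rho t := proj1_sig (Hrho t).
have rho_pos : forall t, 0 < rho t by move=> t; exact: (proj1 (proj2_sig (Hrho t))).
have Heta : forall t, {e | 0 < e /\ forall s, Rabs (s - t) < e -> vnorm (vsub (g s) (g t)) < rho t / (2 * (INR n + 1))}.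
  move=> t; apply: constructive_indefinite_description; apply: vec_cont => //.
  apply Rdiv_lt_0_compat; [exact: rho_pos|lra].
pose eta t := proj1_sig (Heta t).
have eta_pos : forall t, 0 < eta t by move=> t; exact: (proj1 (proj2_sig (Heta t))).
have dpos : forall t, 0 < Rmin (eta t) (rho t / (2 * (INR n + 1))).
  move=> t; apply Rmin_pos; [exact: eta_pos| apply Rdiv_lt_0_compat; [exact: rho_pos|lra]].
pose delta t := mkposreal _ (dpos t).
have [d Hd] := compactness_value_1d 0 T delta.
exists d; split; first exact: cond_pos.
move=> s y hs hy.
apply: Rnot_le_lt => Hcon.
apply: (Hd s hs) => -[t [ht [hst hdt]]].
simpl in hst, hdt.
have h1 : Rabs (s - t) < eta t by eapply Rlt_le_trans; [exact hst| apply Rmin_l].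
have h2 : d <= rho t / (2 * (INR n + 1)) by eapply Rle_trans; [exact hdt| apply Rmin_r].
have h3 := proj2 (proj2_sig (Heta t)) s h1; rewrite -/(eta t) in h3. 
have h3' : vnorm (vsub (g s) (g t)) < rho t / (2 * (INR n + 1)) by exact h3.
have rp := rho_pos t.
have hq : rho t / (2 * (INR n + 1)) <= rho t / 2.
  apply Rmult_le_compat_l; [lra|]. apply Rinv_le_contravar; lra.
have A1 : Rabs (G (g s) - G (g t)) < eps / 2.
  apply: (proj2 (proj2_sig (Hrho t))); rewrite -/(rho t); lra.
have hyt := vnorm_tri_weak y (g t) (g s).
have A2 : Rabs (G y - G (g t)) < eps / 2.
  apply: (proj2 (proj2_sig (Hrho t))); rewrite -/(rho t).
  eapply Rle_lt_trans; first exact hyt.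
  have hsum : vnorm (vsub y (g s)) + vnorm (vsub (g s) (g t)) < 2 * (rho t / (2 * (INR n + 1)))
    by simpl in hy; lra.
  have -> : rho t = INR n * (2 * (rho t / (2 * (INR n + 1)))) + rho t / (INR n + 1) by field; lra.
  have : 0 < rho t / (INR n + 1) by apply Rdiv_lt_0_compat; lra.
  have := vnorm_ge0 (vsub y (g s)); have := vnorm_ge0 (vsub (g s) (g t)).
  move=> *; nra.
have : Rabs (G y - G (g s)) <= Rabs (G y - G (g t)) + Rabs (G (g s) - G (g t)).
  have -> : G y - G (g s) = (G y - G (g t)) - (G (g s) - G (g t)) by ring.
  eapply Rle_trans; [apply Rabs_triang|]; rewrite Rabs_Ropp; lra.
lra.
Qed.



Lemma cont_sum n (F : 'I_n -> R -> R) t : (forall k, continuity_pt (F k) t) ->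
  continuity_pt (fun s => \big[Rplus/0]_(k<n) F k s) t.
Proof.
elim: n F => [|n IH] F H.
- have -> : (fun s => \big[Rplus/0]_(k<0) F k s) = fun _ => 0.
    by apply: functional_extensionality => s; rewrite big_ord0.
  by apply: continuity_pt_const => x y.
- have -> : (fun s => \big[Rplus/0]_(k<n.+1) F k s) =
     (fun s => \big[Rplus/0]_(k<n) F (widen_ord (leqnSn n) k) s + F ord_max s).
    by apply: functional_extensionality => s; rewrite big_ord_recr.
  apply: (continuity_pt_plus (fun s => \big[Rplus/0]_(k<n) F (widen_ord (leqnSn n) k) s) (F ord_max)).
  + by apply: IH => k.
  + exact: H.
Qed.

Lemma deriv_sum n (F : 'I_n -> R -> R) (D : 'I_n -> R) t : (forall k, derivable_pt_lim (F k) t (D k)) ->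
  derivable_pt_lim (fun s => \big[Rplus/0]_(k<n) F k s) t (\big[Rplus/0]_(k<n) D k).
Proof.
elim: n F D => [|n IH] F D H.
- have -> : (fun s => \big[Rplus/0]_(k<0) F k s) = fct_cte 0.
    by apply: functional_extensionality => s; rewrite big_ord0.
  rewrite big_ord0; exact: derivable_pt_lim_const.
- have -> : (fun s => \big[Rplus/0]_(k<n.+1) F k s) =
     (fun s => \big[Rplus/0]_(k<n) F (widen_ord (leqnSn n) k) s + F ord_max s).
    by apply: functional_extensionality => s; rewrite big_ord_recr.
  rewrite big_ord_recr /=.
  apply: (derivable_pt_lim_plus (fun s => \big[Rplus/0]_(k<n) F (widen_ord (leqnSn n) k) s) (F ord_max)).
  + by apply: IH => k.
  + exact: H.
Qed.

Lemma dot_scale_r n (u h : vec n) c : dot u (vscale c h) = c * dot u h.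
Proof. rewrite /dot sum_scal; apply: sum_ext => k; rewrite /vscale; ring. Qed.

Lemma fdiff_vcont n (g : vec n -> R) x D : fdiff g x D -> vcont g x.
Proof.
move=> H eps He.
have hN := N1_ge0 D.
have [d1 [Hd1 Hg]] := H 1 Rlt_0_1.
have hp : 0 < eps / (2 * (1 + N1 D)) by apply Rdiv_lt_0_compat; lra.
exists (Rmin d1 (eps / (2 * (1 + N1 D)))); split; first exact: Rmin_pos.
move=> y hy.
have hy1 : vnorm (vsub y x) < d1 by eapply Rlt_le_trans; [exact hy|apply Rmin_l].
have hy2 : vnorm (vsub y x) < eps / (2 * (1 + N1 D)) by eapply Rlt_le_trans; [exact hy|apply Rmin_r].
have := Hg _ hy1; rewrite vadd_sub => h1.
have h2 : Rabs (dot D (vsub y x)) <= vnorm (vsub y x) * N1 D.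
  rewrite dotC; apply: dot_bound => k; exact: comp_le_vnorm.
have hv := vnorm_ge0 (vsub y x).
have : Rabs (g y - g x) <= vnorm (vsub y x) * (1 + N1 D).
  have -> : g y - g x = (g y - g x - dot D (vsub y x)) + dot D (vsub y x) by ring.
  eapply Rle_trans; [apply Rabs_triang|]; lra.
have : vnorm (vsub y x) * (1 + N1 D) < eps / 2.
  have -> : eps / 2 = eps / (2 * (1 + N1 D)) * (1 + N1 D) by field; lra.
  apply Rmult_lt_compat_r; lra.
lra.
Qed.

Lemma line_deriv n (g : vec n -> R) (Dg : vec n -> vec n) x h t0 :
  (forall p, fdiff g p (Dg p)) ->
  derivable_pt_lim (fun t => g (vadd x (vscale t h))) t0 (dot (Dg (vadd x (vscale t0 h))) h).
Proof.
move=> H eps He.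
set p := vadd x (vscale t0 h).
have hv := vnorm_ge0 h.
have he' : 0 < eps / (2 * (vnorm h + 1)) by apply Rdiv_lt_0_compat; lra.
have [d [Hd Hg]] := H p _ he'.
have hdp : 0 < d / (vnorm h + 1) by apply Rdiv_lt_0_compat; lra.
exists (mkposreal _ hdp) => s hs0 hs /=. simpl in hs.
have eqv : vadd x (vscale (t0 + s) h) = vadd p (vscale s h).
  apply: functional_extensionality => k; rewrite /p /vadd /vscale; ring.
rewrite eqv.
have hn : vnorm (vscale s h) < d.
  rewrite vnorm_scale.
  have : Rabs s * vnorm h <= Rabs s * (vnorm h + 1) by apply Rmult_le_compat_l; [apply Rabs_pos|lra].
  have : Rabs s * (vnorm h + 1) < d.
    have -> : d = d / (vnorm h + 1) * (vnorm h + 1) by field; lra.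
    apply Rmult_lt_compat_r; lra.
  lra.
have := Hg _ hn; rewrite dot_scale_r vnorm_scale => h1.
have hsa : 0 < Rabs s by apply Rabs_pos_lt.
have -> : (g (vadd p (vscale s h)) - g p) / s - dot (Dg p) h =
          (g (vadd p (vscale s h)) - g p - s * dot (Dg p) h) / s by field.
rewrite /Rdiv Rabs_mult Rabs_inv.
apply (Rmult_lt_reg_r (Rabs s)) => //.
rewrite Rmult_assoc Rinv_l; last lra.
rewrite Rmult_1_r.
eapply Rle_lt_trans; first exact h1.
have : eps / (2 * (vnorm h + 1)) * vnorm h < eps.
  have : vnorm h / (vnorm h + 1) < 1 by apply (Rmult_lt_reg_r (vnorm h + 1)); [lra|]; field_simplify; lra.
  have -> : eps / (2 * (vnorm h + 1)) * vnorm h = eps / 2 * (vnorm h / (vnorm h + 1)) by field; lra.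
  move=> h2. have : 0 <= vnorm h / (vnorm h + 1) by apply Rle_mult_inv_pos; lra. nra.
move=> h3. nra.
Qed.

Lemma unif_rem n (g : vec n -> R) (Dg : vec n -> vec n) (c : R -> vec n) T :
  (forall p, fdiff g p (Dg p)) -> (forall p k, vcont (fun y => Dg y k) p) ->
  (forall t k, continuity_pt (fun s => c s k) t) ->
  forall eps, 0 < eps -> exists rho, 0 < rho /\ forall s y, 0 <= s <= T ->
    vnorm (vsub y (c s)) < rho ->
    Rabs (g y - g (c s) - dot (Dg (c s)) (vsub y (c s))) <= eps * vnorm (vsub y (c s)).
Proof.
move=> Hf Hc Hcur eps He.
have hn := INR_ge0 n.
have he' : 0 < eps / (INR n + 1) by apply Rdiv_lt_0_compat; lra.
have [rho [Hr HP]] := @fin_delta n (fun k r => forall s y, 0 <= s <= T -> vnorm (vsub y (c s)) < r ->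
   Rabs (Dg y k - Dg (c s) k) < eps / (INR n + 1))
  ltac:(move=> k a a' ha hP s y hs hy; apply: hP => //; lra)
  ltac:(move=> k; apply: (curve_unif (G := fun y => Dg y k)) => //; exact: Hc).
exists rho; split => // s y hs hy.
set x := c s; set h := vsub y x.
have [th [Heq Hth]] := MVT_cor2 (fun t => g (vadd x (vscale t h)))
   (fun t => dot (Dg (vadd x (vscale t h))) h) 0 1 Rlt_0_1
   ltac:(move=> t _; exact: line_deriv).
have e1 : vadd x (vscale 1 h) = y by apply: functional_extensionality => k; rewrite /vadd /vscale /h /vsub; ring.
have e0 : vadd x (vscale 0 h) = x by apply: functional_extensionality => k; rewrite /vadd /vscale; ring.
rewrite e1 e0 in Heq.
have -> : g y - g x - dot (Dg x) h = dot (vsub (Dg (vadd x (vscale th h))) (Dg x)) h.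
  rewrite dot_sub_l; lra.
eapply Rle_trans; first apply: (@dot_bound n _ h (eps / (INR n + 1))).
- move=> k; rewrite /vsub; left; apply: HP => //.
  have -> : vsub (vadd x (vscale th h)) x = vscale th h.
    by apply: functional_extensionality => j; rewrite /vadd /vsub /vscale; ring.
  rewrite vnorm_scale Rabs_right; last lra.
  have := vnorm_ge0 h; rewrite /h /x; nra.
- have h1 := N1_le h. have h2 := vnorm_ge0 h.
  have : eps / (INR n + 1) * N1 h <= eps / (INR n + 1) * (INR n * vnorm h) by apply Rmult_le_compat_l; lra.
  have : eps / (INR n + 1) * (INR n * vnorm h) <= eps * vnorm h.
    have -> : eps / (INR n + 1) * (INR n * vnorm h) = eps * vnorm h * (INR n / (INR n + 1)) by field; lra.
    have : INR n / (INR n + 1) <= 1 by apply (Rmult_le_reg_r (INR n + 1)); [lra|]; field_simplify; lra.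
    have : 0 <= eps * vnorm h by nra.
    nra.
  lra.
Qed.



Lemma mvt_open (f f' : R -> R) a b : a < b ->
  (forall c, a <= c <= b -> continuity_pt f c) ->
  (forall c, a < c < b -> derivable_pt_lim f c (f' c)) ->
  exists c, a < c < b /\ f b - f a = f' c * (b - a).
Proof.
move=> hab Hc Hd.
have pr1 : forall c, a < c < b -> derivable_pt f c by move=> c hc; exists (f' c); exact: Hd.
have pr2 : forall c, a < c < b -> derivable_pt Ranalysis1.id c by move=> c _; exact: derivable_pt_id.
have [c [P Heq]] := MVT f Ranalysis1.id a b pr1 pr2 hab Hc (fun c _ => derivable_continuous_pt _ _ (derivable_pt_id c)).
exists c; split => //.
rewrite (derive_pt_eq_0 f c (f' c) (pr1 c P) (Hd c P)) in Heq.
rewrite (derive_pt_eq_0 Ranalysis1.id c 1 (pr2 c P) (derivable_pt_lim_id c)) in Heq.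
rewrite /Ranalysis1.id in Heq; lra.
Qed.

Lemma integ_RInt g a b : ex_RInt g a b -> integ g a b = RInt g a b.
Proof.
move=> H; rewrite /integ.
have ex : exists I, exists pr : Riemann_integrable g a b, RiemannInt pr = I.
  by exists (RiemannInt (ex_RInt_Reals_0 _ _ _ H)); exists (ex_RInt_Reals_0 _ _ _ H).
have [pr <-] := epsilon_spec (inhabits 0) _ ex.
by rewrite (RInt_Reals _ _ _ pr).
Qed.

Lemma ex_RInt_cont (h : R -> R) a b : (forall x, continuity_pt h x) -> ex_RInt h a b.
Proof. move=> H; apply: ex_RInt_continuous => z _; apply/continuity_pt_filterlim; exact: H. Qed.

Lemma ex_RInt_agree (h hc : R -> R) a b : a <= b -> (forall x, continuity_pt hc x) ->
  (forall t, a <= t <= b -> h t = hc t) -> ex_RInt h a b /\ RInt h a b = RInt hc a b.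
Proof.
move=> hab Hc Heq; split.
- apply: (ex_RInt_ext hc); last exact: ex_RInt_cont.
  move=> x; rewrite Rmin_left // Rmax_right // => hx; symmetry; apply: Heq; lra.
- apply: RInt_ext => x; rewrite Rmin_left // Rmax_right // => hx; apply: Heq; lra.
Qed.

Lemma ftc (h D : R -> R) T : 0 < T -> (forall x, continuity_pt h x) -> (forall x, continuity_pt D x) ->
  (forall t, 0 < t < T -> derivable_pt_lim h t (D t)) -> h T - h 0 = RInt D 0 T.
Proof.
move=> HT Hh HD Hd.
have Hder : forall t, derivable_pt_lim (fun s => RInt D 0 s) t (D t).
  move=> t; apply/is_derive_Reals; apply: is_derive_RInt.
  - apply: filter_forall => b; apply: RInt_correct; exact: ex_RInt_cont.
  - apply/continuity_pt_filterlim; exact: HD.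
pose G s := h s - RInt D 0 s.
have HG : forall c, 0 <= c <= T -> continuity_pt G c.
  move=> c _; apply: continuity_pt_minus => //.
  apply: derivable_continuous_pt; exists (D c); exact: Hder.
have HdG : forall c, 0 < c < T -> derivable_pt_lim G c ((fun _ => 0) c).
  move=> c hc; have := derivable_pt_lim_minus h (fun s => RInt D 0 s) c (D c) (D c) (Hd c hc) (Hder c).
  by rewrite Rminus_eq_0.
have [c [hc Heq]] := @mvt_open G (fun _ => 0) 0 T HT HG HdG.
move: Heq; rewrite /G RInt_point; rewrite /zero /=; lra.
Qed.

Lemma barrier (phi dphi : R -> R) T A B : 0 < T ->
  (forall x, continuity_pt phi x) ->
  (forall t, 0 < t < T -> derivable_pt_lim phi t (dphi t)) ->
  (forall t, 0 < t < T -> phi t < B -> dphi t <= 0) ->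
  phi 0 <= A -> A < B -> forall t, 0 <= t <= T -> phi t <= A.
Proof.
move=> HT Hc Hd Hneg H0 HAB t1 ht1.
apply: Rnot_lt_le => Hcon.
pose S s := 0 <= s <= t1 /\ phi s <= A.
have Sb : bound S by exists t1 => s [[_ h] _].
have Sne : exists s, S s by exists 0; split => //; lra.
have [tau [Hub Hlub]] := completeness _ Sb Sne.
have tau0 : 0 <= tau by apply: Hub; split => //; lra.
have taut1 : tau <= t1 by apply: Hlub => s [[_ h] _].
have Htau : phi tau <= A.
  apply: Rnot_lt_le => hlt.
  have [al [Hal Hs]] := @cont_pt_elim _ _ (Hc tau) (phi tau - A) ltac:(lra).
  have : tau <= tau - al / 2.
    apply: Hlub => s [hs hsA].
    have hst : s <= tau by apply: Hub.
    apply: Rnot_lt_le => hlt2.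
    have : Rabs (s - tau) < al by rewrite Rabs_left1; lra.
    move/Hs; split_Rabs; lra.
  lra.
have tault : tau < t1.
  case: (Rle_lt_or_eq_dec _ _ taut1) => // heq; rewrite heq in Htau; lra.
have [al [Hal Hs]] := @cont_pt_elim _ _ (Hc tau) (B - A) ltac:(lra).
pose t2 := Rmin (tau + al / 2) t1.
have t2gt : tau < t2 by apply Rmin_glb_lt; lra.
have t2le : t2 <= t1 by apply Rmin_r.
have t2le' : t2 <= tau + al / 2 by apply Rmin_l.
have [c [hc Heq]] := @mvt_open phi dphi tau t2 t2gt (fun c _ => Hc c)
  ltac:(move=> c hc; apply: Hd; lra).
have hdc : dphi c <= 0.
  apply: Hneg; first lra.
  have : Rabs (c - tau) < al by rewrite Rabs_right; lra.
  move/Hs; split_Rabs; lra.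
have : phi t2 <= A by nra.
move=> h2.
have : t2 <= tau by apply: Hub; split => //; lra.
lra.
Qed.



Lemma dpl_mult f g x lf lg : derivable_pt_lim f x lf -> derivable_pt_lim g x lg ->
  derivable_pt_lim (fun s => f s * g s) x (lf * g x + f x * lg).
Proof. move=> H1 H2; exact: (derivable_pt_lim_mult f g x lf lg H1 H2). Qed.
Lemma dpl_plus f g x lf lg : derivable_pt_lim f x lf -> derivable_pt_lim g x lg ->
  derivable_pt_lim (fun s => f s + g s) x (lf + lg).
Proof. move=> H1 H2; exact: (derivable_pt_lim_plus f g x lf lg H1 H2). Qed.
Lemma dpl_minus f g x lf lg : derivable_pt_lim f x lf -> derivable_pt_lim g x lg ->
  derivable_pt_lim (fun s => f s - g s) x (lf - lg).
Proof. move=> H1 H2; exact: (derivable_pt_lim_minus f g x lf lg H1 H2). Qed.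
Lemma dpl_const (a x : R) : derivable_pt_lim (fun _ => a) x 0.
Proof. exact: derivable_pt_lim_const. Qed.
Lemma dpl_eq f x l l' : derivable_pt_lim f x l -> l = l' -> derivable_pt_lim f x l'.
Proof. by move=> H <-. Qed.
Lemma dpl_explin c x : derivable_pt_lim (fun s => exp (- c * s)) x (- c * exp (- c * x)).
Proof.
have H := derivable_pt_lim_comp (fun s => - c * s) exp x (- c) (exp (- c * x))
  ltac:(apply: (dpl_eq (l := -c * 1)); [exact: (derivable_pt_lim_scal Ranalysis1.id (-c) x 1 (derivable_pt_lim_id x))| ring])
  (derivable_pt_lim_exp _).
apply: (dpl_eq H); ring.
Qed.

Lemma cpt_mult f g x : continuity_pt f x -> continuity_pt g x -> continuity_pt (fun s => f s * g s) x.
Proof. move=> H1 H2; exact: (continuity_pt_mult f g x H1 H2). Qed.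
Lemma cpt_plus f g x : continuity_pt f x -> continuity_pt g x -> continuity_pt (fun s => f s + g s) x.
Proof. move=> H1 H2; exact: (continuity_pt_plus f g x H1 H2). Qed.
Lemma cpt_minus f g x : continuity_pt f x -> continuity_pt g x -> continuity_pt (fun s => f s - g s) x.
Proof. move=> H1 H2; exact: (continuity_pt_minus f g x H1 H2). Qed.
Lemma cpt_const (a x : R) : continuity_pt (fun _ => a) x.
Proof. by apply: continuity_pt_const => u v. Qed.
Lemma cpt_abs f x : continuity_pt f x -> continuity_pt (fun s => Rabs (f s)) x.
Proof. move=> H; exact: (continuity_pt_comp f Rabs x H (Rcontinuity_abs _)). Qed.
Lemma cpt_explin c x : continuity_pt (fun s => exp (- c * s)) x.
Proof. apply: derivable_continuous_pt; eexists; exact: dpl_explin. Qed.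
Lemma cpt_dot n (u v : R -> vec n) x : (forall k, continuity_pt (fun s => u s k) x) ->
  (forall k, continuity_pt (fun s => v s k) x) -> continuity_pt (fun s => dot (u s) (v s)) x.
Proof. move=> H1 H2; apply: cont_sum => k; exact: cpt_mult. Qed.

Lemma vcont_minus n (g h : vec n -> R) x : vcont g x -> vcont h x -> vcont (fun y => g y - h y) x.
Proof.
move=> H1 H2 eps He.
have [d1 [Hd1 H1']] := H1 (eps/2) ltac:(lra).
have [d2 [Hd2 H2']] := H2 (eps/2) ltac:(lra).
exists (Rmin d1 d2); split; first exact: Rmin_pos.
move=> y hy.
have := H1' y (Rlt_le_trans _ _ _ hy (Rmin_l _ _)).
have := H2' y (Rlt_le_trans _ _ _ hy (Rmin_r _ _)).
move=> a b; have -> : g y - h y - (g x - h x) = (g y - g x) - (h y - h x) by ring.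
eapply Rle_lt_trans; [apply Rabs_triang|]; rewrite Rabs_Ropp; lra.
Qed.

Lemma deriv_local g h t l eta : 0 < eta -> (forall s, Rabs (s - t) < eta -> g s = h s) ->
  derivable_pt_lim g t l -> derivable_pt_lim h t l.
Proof.
move=> He Heq H eps Heps.
have [d Hd] := H eps Heps.
have hp : 0 < Rmin d eta by apply: Rmin_pos; [exact: cond_pos|].
exists (mkposreal _ hp) => s hs0 hs /=. simpl in hs.
rewrite -!Heq; first (apply: Hd => //; eapply Rlt_le_trans; [exact hs|apply Rmin_l]).
- rewrite Rminus_eq_0 Rabs_R0; lra.
- have -> : t + s - t = s by ring. eapply Rlt_le_trans; [exact hs|apply Rmin_r].
Qed.

Lemma clamp_curve n T (z : R -> vec n) (L : R -> 'I_n -> R) : 0 < T ->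
  (forall k, cont_on 0 T (fun t => z t k)) ->
  (forall t, 0 < t < T -> forall k, derivable_pt_lim (fun s => z s k) t (L t k)) ->
  (forall t k, continuity_pt (fun s => z (clamp 0 T s) k) t) /\
  (forall t, 0 < t < T -> forall k, derivable_pt_lim (fun s => z (clamp 0 T s) k) t (L t k)).
Proof.
move=> HT Hc Hd; split.
- move=> t k; apply: (cont_on_clamp (g := fun t => z t k)); [lra|exact: Hc].
- move=> t ht k; apply: (deriv_local (eta := Rmin t (T - t))) ; last exact: Hd.
  + apply Rmin_pos; lra.
  + move=> s hs; rewrite clamp_id //.
    have h1 := Rmin_l t (T - t); have h2 := Rmin_r t (T - t).
    split_Rabs; lra.
Qed.



Lemma cont_bound (g : R -> R) T : 0 <= T -> (forall x, continuity_pt g x) ->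
  exists M, forall t, 0 <= t <= T -> g t <= M.
Proof.
move=> HT Hc; have [Mx [H _]] := continuity_ab_maj g 0 T HT (fun c _ => Hc c).
by exists (g Mx).
Qed.

Lemma curve_bound n (G : vec n -> R) (g : R -> vec n) T : 0 <= T ->
  (forall y, vcont G y) -> (forall t k, continuity_pt (fun s => g s k) t) ->
  exists M, 0 <= M /\ forall t, 0 <= t <= T -> Rabs (G (g t)) <= M.
Proof.
move=> HT HG Hg.
have [M HM] := @cont_bound (fun t => Rabs (G (g t))) T HT
  ltac:(move=> x; apply: cpt_abs; apply: comp_cont => //).
exists (Rmax 0 M); split; first exact: Rmax_l.
move=> t ht; eapply Rle_trans; [exact: HM|apply Rmax_r].
Qed.

Lemma exp_le x y : x <= y -> exp x <= exp y.
Proof. case=> [h|->]; [left; exact: exp_increasing| lra]. Qed.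

Lemma gronwall n T (F0 F1 : vec n -> vec n) (DF0 : vec n -> 'I_n -> vec n)
  (xb : R -> vec n) (xe : R -> R -> vec n) : 0 < T ->
  (forall y k, fdiff (fun y => F0 y k) y (DF0 y k)) ->
  (forall y k j, vcont (fun y => DF0 y k j) y) ->
  (forall y k, vcont (fun y => F1 y k) y) ->
  (forall t k, continuity_pt (fun s => xb s k) t) ->
  (forall t, 0 < t < T -> forall k, derivable_pt_lim (fun s => xb s k) t (F0 (xb t) k)) ->
  (forall e, 0 < e <= 1 -> forall t k, continuity_pt (fun s => xe e s k) t) ->
  (forall e, 0 < e <= 1 -> forall t, 0 < t < T -> forall k,
     derivable_pt_lim (fun s => xe e s k) t ((1 - e) * F0 (xe e t) k + e * F1 (xe e t) k)) ->
  (forall e k, 0 < e <= 1 -> xe e 0 k = xb 0 k) ->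
  exists Ks e1, 0 < Ks /\ 0 < e1 /\ forall e, 0 < e <= 1 -> e < e1 ->
    forall t, 0 <= t <= T -> vnorm (vsub (xe e t) (xb t)) <= Ks * e.
Proof.
move=> HT HF0 HDF0 HF1 Hxbc Hxbd Hxec Hxed Hxe0.
have hn := INR_ge0 n.
have HF0c : forall y k, vcont (fun y => F0 y k) y by move=> y k; exact: fdiff_vcont.
have [rho1 [Hr1 HR1]] := @fin_delta n (fun k r => forall s y, 0 <= s <= T -> vnorm (vsub y (xb s)) < r ->
   Rabs (F0 y k - F0 (xb s) k - dot (DF0 (xb s) k) (vsub y (xb s))) <= 1 * vnorm (vsub y (xb s)))
  ltac:(move=> k a a' ha hP s y hs hy; apply: hP => //; lra)
  ltac:(move=> k; apply: (@unif_rem n (fun y => F0 y k) (fun y => DF0 y k) xb T) => //; lra).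
have [Dm HDm] := @cont_bound (fun s => \big[Rplus/0]_(k<n) N1 (DF0 (xb s) k)) T ltac:(lra)
  ltac:(move=> x; apply: cont_sum => k; apply: cont_sum => j; apply: cpt_abs;
        apply: (comp_cont (G := fun y => DF0 y k j)) => //; exact: HDF0).
have HDk : forall s k, 0 <= s <= T -> N1 (DF0 (xb s) k) <= Dm.
  move=> s k hs; eapply Rle_trans; [|exact: (HDm s hs)].
  apply: (@term_le_sum n (fun k => N1 (DF0 (xb s) k))) => j; exact: N1_ge0.
have Dm0 : 0 <= Dm.
  eapply Rle_trans; last apply: (HDm 0); last lra.
  apply: sum_ge0 => k; exact: N1_ge0.
pose G y k := F1 y k - F0 y k.
have HGc : forall y k, vcont (fun y => G y k) y by move=> y k; apply: vcont_minus.
have [rho2 [Hr2 HR2]] := @fin_delta n (fun k r => forall s y, 0 <= s <= T -> vnorm (vsub y (xb s)) < r ->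
   Rabs (G y k - G (xb s) k) < 1)
  ltac:(move=> k a a' ha hP s y hs hy; apply: hP => //; lra)
  ltac:(move=> k; apply: (curve_unif (G := fun y => G y k)) => //; lra).
have [M0 HM0] := @cont_bound (fun s => \big[Rplus/0]_(k<n) Rabs (G (xb s) k)) T ltac:(lra)
  ltac:(move=> x; apply: cont_sum => k; apply: cpt_abs;
        apply: (comp_cont (G := fun y => G y k)) => //).
have HGk : forall s k, 0 <= s <= T -> Rabs (G (xb s) k) <= Rmax 0 M0.
  move=> s k hs; eapply Rle_trans; [|apply Rmax_r]. eapply Rle_trans; [|exact: (HM0 s hs)].
  apply: (@term_le_sum n (fun k => Rabs (G (xb s) k))) => j; exact: Rabs_pos.
pose rho := Rmin rho1 rho2.
have Hrho : 0 < rho by apply: Rmin_pos.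
pose L := 1 + Dm.
pose M := Rmax 0 M0 + 1.
have M0' := Rmax_l 0 M0.
pose c := 2 * INR n * L + INR n * M + 1.
have hc : 0 < c by rewrite /c /L /M; nra.
have Hdbound : forall e t y k, 0 < e <= 1 -> 0 <= t <= T -> vnorm (vsub y (xb t)) < rho ->
   Rabs ((1 - e) * F0 y k + e * F1 y k - F0 (xb t) k) <= L * vnorm (vsub y (xb t)) + e * M.
  move=> e t y k he ht hy.
  have hy1 : vnorm (vsub y (xb t)) < rho1 by eapply Rlt_le_trans; [exact hy| apply Rmin_l].
  have hy2 : vnorm (vsub y (xb t)) < rho2 by eapply Rlt_le_trans; [exact hy| apply Rmin_r].
  have h1 := HR1 k t y ht hy1.
  have h2 := HR2 k t y ht hy2.
  have h3 : Rabs (dot (DF0 (xb t) k) (vsub y (xb t))) <= vnorm (vsub y (xb t)) * Dm.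
    rewrite dotC; eapply Rle_trans; first apply: (@dot_bound n (vsub y (xb t)) _ (vnorm (vsub y (xb t)))).
    - move=> j; exact: comp_le_vnorm.
    - apply Rmult_le_compat_l; [exact: vnorm_ge0| exact: HDk].
  have h4 := HGk t k ht.
  have -> : (1 - e) * F0 y k + e * F1 y k - F0 (xb t) k =
     (F0 y k - F0 (xb t) k - dot (DF0 (xb t) k) (vsub y (xb t))) + dot (DF0 (xb t) k) (vsub y (xb t))
     + e * ((G y k - G (xb t) k) + G (xb t) k) by rewrite /G; ring.
  eapply Rle_trans; [apply Rabs_triang|].
  have := Rabs_triang (F0 y k - F0 (xb t) k - dot (DF0 (xb t) k) (vsub y (xb t))) (dot (DF0 (xb t) k) (vsub y (xb t))).
  rewrite Rabs_mult (Rabs_right e); last lra.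
  have := Rabs_triang (G y k - G (xb t) k) (G (xb t) k).
  rewrite /L /M; move=> *; nra.
pose Ks := exp (c * T / 2).
pose e1 := rho * exp (- (c * T / 2)).
exists Ks, e1; split; first exact: exp_pos.
split; first by apply Rmult_lt_0_compat => //; exact: exp_pos.
move=> e he hee1.
pose d t := vsub (xe e t) (xb t).
pose w t := dot (d t) (d t).
pose dd t k := (1 - e) * F0 (xe e t) k + e * F1 (xe e t) k - F0 (xb t) k.
pose phi t := (w t + e * e) * exp (- c * t).
pose wd t := \big[Rplus/0]_(k<n) (dd t k * d t k + d t k * dd t k).
pose dphi t := (wd t - c * (w t + e * e)) * exp (- c * t).
have Hdc : forall t k, continuity_pt (fun s => d s k) t by move=> t k; apply: cpt_minus; [exact: Hxec|exact: Hxbc].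
have Hwc : forall x, continuity_pt w x by move=> x; apply: cpt_dot => k; exact: Hdc.
have Hphic : forall x, continuity_pt phi x.
  move=> x; apply: cpt_mult; [apply: cpt_plus; [exact: Hwc| exact: cpt_const]| exact: cpt_explin].
have Hphid : forall t, 0 < t < T -> derivable_pt_lim phi t (dphi t).
  move=> t ht.
  have Hdd : forall k, derivable_pt_lim (fun s => d s k) t (dd t k) by move=> k; apply: dpl_minus; [exact: Hxed| exact: Hxbd].
  have Hw : derivable_pt_lim w t (wd t) by apply: deriv_sum => k; apply: dpl_mult; exact: Hdd.
  apply: (dpl_eq (dpl_mult (dpl_plus Hw (dpl_const (e * e) t)) (dpl_explin c t))).
  rewrite /dphi; ring.
have Hneg : forall t, 0 < t < T -> phi t < rho * rho * exp (- c * T) -> dphi t <= 0.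
  move=> t ht hphi.
  have hw0 : 0 <= w t by exact: dot_ge0.
  have hexp : exp (- c * T) <= exp (- c * t) by apply: exp_le; nra.
  have hep := exp_pos (- c * t).
  have hwr : w t + e * e < rho * rho.
    have : (w t + e * e) * exp (- c * t) < rho * rho * exp (- c * t) by rewrite /phi in hphi; nra.
    move=> h; apply: (Rmult_lt_reg_r (exp (- c * t))) => //.
  have hv0 := vnorm_ge0 (d t).
  have hvs := vnorm_sq (d t).
  have hvr : vnorm (d t) < rho by rewrite -/(w t) in hvs; nra.
  have hdk : forall k, Rabs (dd t k) <= L * vnorm (d t) + e * M.
    move=> k; apply: Hdbound => //; lra.
  have hwd : wd t <= INR n * (2 * vnorm (d t) * (L * vnorm (d t) + e * M)).
    apply: sum_le_const => k.
    have h1 := hdk k; have h2 := comp_le_vnorm (d t) k.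
    have : dd t k * d t k <= Rabs (dd t k) * Rabs (d t k) by rewrite -Rabs_mult; apply Rle_abs.
    have : 0 <= Rabs (dd t k) by apply Rabs_pos.
    have : 0 <= Rabs (d t k) by apply Rabs_pos.
    nra.
  have hL : 0 <= L by rewrite /L; lra.
  have hM : 0 <= M by rewrite /M; lra.
  have : wd t <= c * (w t + e * e).
    eapply Rle_trans; first exact hwd.
    rewrite /w -hvs /c.
    have : 0 <= INR n * M * ((vnorm (d t) - e) * (vnorm (d t) - e)).
      apply Rmult_le_pos. apply Rmult_le_pos. lra. lra. exact: (Rle_0_sqr (vnorm (d t) - e)).
    have : 0 <= (vnorm (d t) * vnorm (d t) + e * e) by nra.
    have : 0 <= INR n * L * (e * e) by apply Rmult_le_pos; [apply Rmult_le_pos; lra| nra].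
    move=> h3 h2 h1.
    have -> : c * (vnorm (d t) * vnorm (d t) + e * e) = INR n * (2 * vnorm (d t) * (L * vnorm (d t) + e * M)) + (2 * (INR n * L * (e * e)) + INR n * M * ((vnorm (d t) - e) * (vnorm (d t) - e)) + (vnorm (d t) * vnorm (d t) + e * e)) by rewrite /c; ring.
    lra.
  move=> h; rewrite /dphi; nra.
have Hw0 : w 0 = 0.
  rewrite /w /dot (sum_ext (G := fun _ => 0)); first by rewrite sum_const; ring.
  move=> k; rewrite /d /vsub Hxe0 //; ring.
have Hphi0 : phi 0 <= e * e by rewrite /phi Hw0 Rmult_0_r exp_0; lra.
have eK : exp (- (c * T / 2)) * exp (- (c * T / 2)) = exp (- c * T).
  rewrite -exp_plus. f_equal. lra.
have HAB : e * e < rho * rho * exp (- c * T).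
  rewrite -eK. have := exp_pos (- (c * T / 2)). rewrite /e1 in hee1. nra.
have Hbar := barrier HT Hphic Hphid Hneg Hphi0 HAB.
move=> t ht.
have := Hbar t ht; rewrite /phi => h.
have hep := exp_pos (- c * t).
have hinv : exp (- c * t) * exp (c * t) = 1.
  rewrite -exp_plus. have -> : - c * t + c * t = 0 by lra. exact: exp_0.
have hw : w t + e * e <= e * e * exp (c * t).
  have : (w t + e * e) * exp (- c * t) * exp (c * t) <= e * e * exp (c * t).
    apply Rmult_le_compat_r => //; left; exact: exp_pos.
  by rewrite Rmult_assoc hinv Rmult_1_r.
have hKs : exp (c * t) <= Ks * Ks.
  rewrite /Ks -exp_plus; apply: exp_le; nra.
have hv0 := vnorm_ge0 (d t).
have hvs := vnorm_sq (d t).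
rewrite -/(d t).
have hKs0 : 0 < Ks by exact: exp_pos.
have hw0 : 0 <= w t by exact: dot_ge0.
rewrite -/(w t) in hvs.
have : vnorm (d t) * vnorm (d t) <= (Ks * e) * (Ks * e).
  have : e * e * exp (c * t) <= e * e * (Ks * Ks) by apply Rmult_le_compat_l => //; nra.
  nra.
move=> h2; apply: Rnot_lt_le => hlt.
have hKe : 0 <= Ks * e by nra.
have := Rmult_le_0_lt_compat _ _ _ _ hKe hKe hlt hlt. lra.
Qed.



Lemma RInt_add f g a b : ex_RInt f a b -> ex_RInt g a b -> RInt (fun t => f t + g t) a b = RInt f a b + RInt g a b.
Proof. move=> H1 H2; exact (RInt_plus f g a b H1 H2). Qed.
Lemma RInt_sub f g a b : ex_RInt f a b -> ex_RInt g a b -> RInt (fun t => f t - g t) a b = RInt f a b - RInt g a b.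
Proof. move=> H1 H2; exact (RInt_minus f g a b H1 H2). Qed.
Lemma RInt_sc f c a b : ex_RInt f a b -> RInt (fun t => c * f t) a b = c * RInt f a b.
Proof. move=> H1; exact (RInt_scal f a b c H1). Qed.

Lemma sum_swap n (A : 'I_n -> 'I_n -> R) (l d : 'I_n -> R) :
  \big[Rplus/0]_(k<n) ((\big[Rplus/0]_(j<n) (A j k * l j)) * d k) =
  \big[Rplus/0]_(k<n) (l k * \big[Rplus/0]_(j<n) (A k j * d j)).
Proof.
have -> : \big[Rplus/0]_(k<n) ((\big[Rplus/0]_(j<n) (A j k * l j)) * d k) =
  \big[Rplus/0]_(k<n) \big[Rplus/0]_(j<n) (A j k * l j * d k).
  by apply: sum_ext => k; rewrite sum_scal_r.
have -> : \big[Rplus/0]_(k<n) (l k * \big[Rplus/0]_(j<n) (A k j * d j)) =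
  \big[Rplus/0]_(k<n) \big[Rplus/0]_(j<n) (l k * (A k j * d j)).
  by apply: sum_ext => k; rewrite sum_scal.
rewrite exchange_big /=; apply: sum_ext => k; apply: sum_ext => j; ring.
Qed.

Definition Dfun_def n e (F0 F1 : vec n -> vec n) (DF0 : vec n -> 'I_n -> vec n) (Dr0 : vec n -> vec n)
  (xbc xec lamc : R -> vec n) (t : R) : R :=
     \big[Rplus/0]_(k<n) (lamc t k * (F0 (xec t) k - F0 (xbc t) k - dot (DF0 (xbc t) k) (vsub (xec t) (xbc t))))
     - dot (Dr0 (xbc t)) (vsub (xec t) (xbc t))
     + e * \big[Rplus/0]_(k<n) (lamc t k * (F1 (xec t) k - F0 (xec t) k)).

Lemma adj_id n T e (F0 F1 : vec n -> vec n) (DF0 : vec n -> 'I_n -> vec n) (Dr0 : vec n -> vec n)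
  (xbc xec lamc : R -> vec n) : 0 < T ->
  (forall y k, vcont (fun y => F0 y k) y) -> (forall y k, vcont (fun y => F1 y k) y) ->
  (forall y k j, vcont (fun y => DF0 y k j) y) -> (forall y k, vcont (fun y => Dr0 y k) y) ->
  (forall t k, continuity_pt (fun s => xbc s k) t) ->
  (forall t k, continuity_pt (fun s => xec s k) t) ->
  (forall t k, continuity_pt (fun s => lamc s k) t) ->
  (forall t, 0 < t < T -> forall k, derivable_pt_lim (fun s => xbc s k) t (F0 (xbc t) k)) ->
  (forall t, 0 < t < T -> forall k,
     derivable_pt_lim (fun s => xec s k) t ((1 - e) * F0 (xec t) k + e * F1 (xec t) k)) ->
  (forall t, 0 < t < T -> forall k, derivable_pt_lim (fun s => lamc s k) t
       (- (\big[Rplus/0]_(j < n) (DF0 (xbc t) j k * lamc t j) + Dr0 (xbc t) k))) ->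
  (forall k, xec 0 k = xbc 0 k) ->
  (forall x, continuity_pt (Dfun_def e F0 F1 DF0 Dr0 xbc xec lamc) x) /\
  dot (lamc T) (vsub (xec T) (xbc T)) = RInt (Dfun_def e F0 F1 DF0 Dr0 xbc xec lamc) 0 T.
Proof.
move=> HT HF0 HF1 HDF0 HDr0 Hxbc Hxec Hlamc Hxbd Hxed Hlamd H0.
set Dfun := Dfun_def e F0 F1 DF0 Dr0 xbc xec lamc.
have Hdc : forall t k, continuity_pt (fun s => vsub (xec s) (xbc s) k) t.
  by move=> t k; apply: cpt_minus.
have HDc : forall x, continuity_pt Dfun x.
  move=> x; rewrite /Dfun /Dfun_def; apply: cpt_plus; first apply: cpt_minus.
  - apply: cont_sum => k; apply: cpt_mult => //.
    apply: cpt_minus; first apply: cpt_minus.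
    + exact: (comp_cont (G := fun y => F0 y k)).
    + exact: (comp_cont (G := fun y => F0 y k)).
    + apply: cpt_dot => // j; exact: (comp_cont (G := fun y => DF0 y k j)).
  - apply: cpt_dot => // j; exact: (comp_cont (G := fun y => Dr0 y j)).
  - apply: cpt_mult; first exact: cpt_const.
    apply: cont_sum => k; apply: cpt_mult => //.
    apply: cpt_minus; [exact: (comp_cont (G := fun y => F1 y k)) | exact: (comp_cont (G := fun y => F0 y k))].
split => //.
pose h t := dot (lamc t) (vsub (xec t) (xbc t)).
have Hhc : forall x, continuity_pt h x by move=> x; apply: cpt_dot.
have Hhd : forall t, 0 < t < T -> derivable_pt_lim h t (Dfun t).
  move=> t ht.
  have Hdd : forall k, derivable_pt_lim (fun s => vsub (xec s) (xbc s) k) t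
     ((1 - e) * F0 (xec t) k + e * F1 (xec t) k - F0 (xbc t) k).
    by move=> k; apply: dpl_minus; [exact: Hxed| exact: Hxbd].
  apply: (dpl_eq (deriv_sum (fun k => dpl_mult (Hlamd t ht k) (Hdd k)))).
  rewrite (sum_ext (G := fun k =>
     (lamc t k * (F0 (xec t) k - F0 (xbc t) k) - (\big[Rplus/0]_(j<n) (DF0 (xbc t) j k * lamc t j)) * vsub (xec t) (xbc t) k)
     - Dr0 (xbc t) k * vsub (xec t) (xbc t) k + e * (lamc t k * (F1 (xec t) k - F0 (xec t) k)))); last first.
    by move=> k; ring.
  rewrite sum_plus !sum_minus -sum_scal sum_swap /Dfun /Dfun_def.
  have -> : \big[Rplus/0]_(k<n) (lamc t k * (F0 (xec t) k - F0 (xbc t) k - dot (DF0 (xbc t) k) (vsub (xec t) (xbc t))))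
     = \big[Rplus/0]_(k<n) (lamc t k * (F0 (xec t) k - F0 (xbc t) k)) -
       \big[Rplus/0]_(k<n) (lamc t k * \big[Rplus/0]_(j<n) (DF0 (xbc t) k j * vsub (xec t) (xbc t) j)).
    by rewrite -sum_minus; apply: sum_ext => k; rewrite /dot; ring.
  by rewrite /dot.
have := ftc HT Hhc HDc Hhd.
have -> : h 0 = 0.
  rewrite /h /dot (sum_ext (G := fun _ => 0)); first by rewrite sum_const; ring.
  move=> k; rewrite /vsub H0; ring.
by rewrite Rminus_0_r.
Qed.



Lemma main_lemma n T (F0 F1 : vec n -> vec n) (DF0 : vec n -> 'I_n -> vec n)
  (r0 r1 : vec n -> R) (Dr0 : vec n -> vec n) (q : vec n -> R) (Dq : vec n -> vec n)
  (x0 : vec n) (xb lam : R -> vec n) (xe : R -> R -> vec n) :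
  0 < T ->
  (forall y k, fdiff (fun y => F0 y k) y (DF0 y k)) ->
  (forall y k j, vcont (fun y => DF0 y k j) y) ->
  (forall y k, vcont (fun y => F1 y k) y) ->
  (forall y, fdiff r0 y (Dr0 y)) ->
  (forall y k, vcont (fun y => Dr0 y k) y) ->
  (forall y, vcont r1 y) ->
  fdiff q (xb T) (Dq (xb T)) ->
  ode_sol T F0 x0 xb ->
  adjoint_sol T DF0 Dr0 Dq xb lam ->
  (forall e, 0 < e <= 1 -> ode_sol T (fun y => vadd (vscale (1 - e) (F0 y)) (vscale e (F1 y))) x0 (xe e)) ->
  let Ifun := fun t => dot (vsub (F1 (xb t)) (F0 (xb t))) (lam t) + r1 (xb t) - r0 (xb t) in
  ex_RInt Ifun 0 T /\
  forall eps, 0 < eps -> exists alp, 0 < alp /\ forall e, 0 < e <= 1 -> e < alp ->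
    Rabs (/ e * ((1 - e) * (integ (fun t => r0 (xe e t)) 0 T + q (xe e T))
                 + e * (integ (fun t => r1 (xe e t)) 0 T + q (xe e T))
                 - (integ (fun t => r0 (xb t)) 0 T + q (xb T))) - RInt Ifun 0 T) < eps.
Proof.
move=> HT HF0 HDF0 HF1 Hr0 HDr0 Hr1 Hq [Hxb0 [Hxbc0 Hxbd0]] [HlamT [Hlamc0 Hlamd0]] Hxe Ifun.
have hn := INR_ge0 n.
have HT' : 0 <= T by lra.
pose C := clamp 0 T.
have HCid : forall t, 0 <= t <= T -> C t = t by move=> t ht; exact: clamp_id.
pose xbc t := xb (C t).
pose lamc t := lam (C t).
pose xec e t := xe e (C t).
have HF0c : forall y k, vcont (fun y => F0 y k) y by move=> y k; exact: fdiff_vcont.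
have Hr0c : forall y, vcont r0 y by move=> y; exact: fdiff_vcont.
have [Hxbc Hxbd'] := clamp_curve HT Hxbc0 Hxbd0.
have Hxbd : forall t, 0 < t < T -> forall k, derivable_pt_lim (fun s => xbc s k) t (F0 (xbc t) k).
  move=> t ht k; have E : C t = t by apply: HCid; lra.
  rewrite /xbc E; exact: Hxbd'.
have [Hlamc Hlamd'] := clamp_curve HT Hlamc0 Hlamd0.
have Hlamd : forall t, 0 < t < T -> forall k, derivable_pt_lim (fun s => lamc s k) t
       (- (\big[Rplus/0]_(j < n) (DF0 (xbc t) j k * lamc t j) + Dr0 (xbc t) k)).
  move=> t ht k; have E : C t = t by apply: HCid; lra.
  rewrite /xbc /lamc E; exact: Hlamd'.
have Hxec : forall e, 0 < e <= 1 -> forall t k, continuity_pt (fun s => xec e s k) t.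
  by move=> e he; have [_ [Hc Hd]] := Hxe e he; exact: (proj1 (clamp_curve HT Hc Hd)).
have Hxed : forall e, 0 < e <= 1 -> forall t, 0 < t < T -> forall k,
     derivable_pt_lim (fun s => xec e s k) t ((1 - e) * F0 (xec e t) k + e * F1 (xec e t) k).
  move=> e he t ht k; have [_ [Hc Hd]] := Hxe e he.
  have E : C t = t by apply: HCid; lra.
  rewrite /xec E; exact: (proj2 (clamp_curve HT Hc Hd)).
have Hxe0 : forall e k, 0 < e <= 1 -> xec e 0 k = xbc 0 k.
  move=> e k he; have [H0 _] := Hxe e he; have E : C 0 = 0 by apply: HCid; lra.
  by rewrite /xec /xbc E H0 Hxb0.
have [Ks [e1 [HKs [He1 Hgr]]]] := gronwall HT HF0 HDF0 HF1 Hxbc Hxbd Hxec Hxed Hxe0.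
have CT : C T = T by apply: HCid; lra.
have Hcomp : forall (G : vec n -> R) (g : R -> vec n), (forall y, vcont G y) ->
    (forall t k, continuity_pt (fun s => g s k) t) -> forall x, continuity_pt (fun t => G (g t)) x.
  by move=> G g HG Hg x; apply: comp_cont.
pose Ifc t := dot (vsub (F1 (xbc t)) (F0 (xbc t))) (lamc t) + r1 (xbc t) - r0 (xbc t).
have HIc : forall x, continuity_pt Ifc x.
  move=> x; apply: cpt_minus; first apply: cpt_plus.
  - apply: cpt_dot => k; last exact: Hlamc.
    rewrite /vsub; apply: cpt_minus.
    + exact: (Hcomp (fun y => F1 y k)).
    + exact: (Hcomp (fun y => F0 y k)).
  - exact: Hcomp.
  - exact: Hcomp.
have [HIex HIeq] := @ex_RInt_agree Ifun Ifc 0 T HT' HIc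
  ltac:(move=> t ht; rewrite /Ifc /xbc /lamc HCid //).
split => // eps Heps.
have [Lam0 HL0] := @cont_bound (fun s => \big[Rplus/0]_(k<n) Rabs (lamc s k)) T HT'
  ltac:(move=> x; apply: cont_sum => k; apply: cpt_abs; exact: Hlamc).
pose Lam := Rmax 0 Lam0.
have HLam0 : 0 <= Lam by apply Rmax_l.
have HLam : forall t k, 0 <= t <= T -> Rabs (lamc t k) <= Lam.
  move=> t k ht; eapply Rle_trans; [|apply Rmax_r]. eapply Rle_trans; [|exact: (HL0 t ht)].
  apply: (@term_le_sum n (fun k => Rabs (lamc t k))) => j; exact: Rabs_pos.
pose K2 := Ks + T * (Ks + 1) * (1 + INR n * Lam).
have HK2 : 0 <= K2.
  rewrite /K2; have : 0 <= INR n * Lam by nra.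
  have : 0 <= T * (Ks + 1) by nra. nra.
pose eps1 := eps / (K2 + 1).
have He1p : 0 < eps1 by apply Rdiv_lt_0_compat; lra.
have [rhoa [Hra HRa]] := @unif_rem n r0 Dr0 xbc T Hr0 HDr0 Hxbc eps1 He1p.
have [rhob [Hrb HRb]] := @fin_delta n (fun k r => forall s y, 0 <= s <= T -> vnorm (vsub y (xbc s)) < r ->
   Rabs (F0 y k - F0 (xbc s) k - dot (DF0 (xbc s) k) (vsub y (xbc s))) <= eps1 * vnorm (vsub y (xbc s)))
  ltac:(move=> k a a' ha hP s y hs hy; apply: hP => //; lra)
  ltac:(move=> k; apply: (@unif_rem n (fun y => F0 y k) (fun y => DF0 y k) xbc T) => //).
have [rhoc [Hrc HRc]] := @curve_unif n (fun y => r1 y - r0 y) xbc T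
  ltac:(move=> y; exact: vcont_minus) Hxbc eps1 He1p.
have [rhod [Hrd HRd]] := @fin_delta n (fun k r => forall s y, 0 <= s <= T -> vnorm (vsub y (xbc s)) < r ->
   Rabs ((F1 y k - F0 y k) - (F1 (xbc s) k - F0 (xbc s) k)) < eps1)
  ltac:(move=> k a a' ha hP s y hs hy; apply: hP => //; lra)
  ltac:(move=> k; apply: (@curve_unif n (fun y => F1 y k - F0 y k) xbc T) => // y; exact: vcont_minus).
have [rhoq [Hrq HRq]] := Hq eps1 He1p.
pose rhos := Rmin (Rmin (Rmin rhoa rhob) (Rmin rhoc rhod)) rhoq.
have Hrhos : 0 < rhos by repeat apply: Rmin_pos.
have rs_a : rhos <= rhoa by rewrite /rhos; repeat (eapply Rle_trans; [apply Rmin_l|]); lra.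
have rs_b : rhos <= rhob.
  rewrite /rhos; eapply Rle_trans; [apply Rmin_l|]; eapply Rle_trans; [apply Rmin_l|]; apply Rmin_r.
have rs_c : rhos <= rhoc.
  rewrite /rhos; eapply Rle_trans; [apply Rmin_l|]; eapply Rle_trans; [apply Rmin_r|]; apply Rmin_l.
have rs_d : rhos <= rhod.
  rewrite /rhos; eapply Rle_trans; [apply Rmin_l|]; eapply Rle_trans; [apply Rmin_r|]; apply Rmin_r.
have rs_q : rhos <= rhoq by rewrite /rhos; apply Rmin_r.
exists (Rmin e1 (rhos / Ks)); split.
  apply: Rmin_pos => //; apply Rdiv_lt_0_compat => //.
move=> e he hea.
have hee1 : e < e1 by eapply Rlt_le_trans; [exact hea|apply Rmin_l].
have heK : Ks * e < rhos.
  have : e < rhos / Ks by eapply Rlt_le_trans; [exact hea|apply Rmin_r].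
  move=> h; apply (Rmult_lt_reg_l (/ Ks)); first by apply Rinv_0_lt_compat.
  rewrite -Rmult_assoc Rinv_l; last lra. rewrite Rmult_1_l. rewrite /Rdiv Rmult_comm in h. exact h.
have Hv : forall t, 0 <= t <= T -> vnorm (vsub (xec e t) (xbc t)) <= Ks * e.
  move=> t ht; exact: Hgr.
have [HDc Hadj] := @adj_id n T e F0 F1 DF0 Dr0 xbc (xec e) lamc HT HF0c HF1 HDF0 HDr0 Hxbc (Hxec e he)
   Hlamc Hxbd (Hxed e he) Hlamd (fun k => Hxe0 e k he).
set Dfun := Dfun_def e F0 F1 DF0 Dr0 xbc (xec e) lamc in HDc Hadj.
have Ha : forall x, continuity_pt (fun t => r0 (xec e t)) x := Hcomp r0 (xec e) Hr0c (Hxec e he).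
have Hb : forall x, continuity_pt (fun t => r0 (xbc t)) x := Hcomp r0 xbc Hr0c Hxbc.
have Hc1 : forall x, continuity_pt (fun t => r1 (xec e t)) x := Hcomp r1 (xec e) Hr1 (Hxec e he).
have [exA I0e] := @ex_RInt_agree (fun t => r0 (xe e t)) (fun t => r0 (xec e t)) 0 T HT' Ha
  ltac:(by move=> t ht; rewrite /xec (HCid t ht)).
have [exB I0b] := @ex_RInt_agree (fun t => r0 (xb t)) (fun t => r0 (xbc t)) 0 T HT' Hb
  ltac:(by move=> t ht; rewrite /xbc (HCid t ht)).
have [exC I1e] := @ex_RInt_agree (fun t => r1 (xe e t)) (fun t => r1 (xec e t)) 0 T HT' Hc1
  ltac:(by move=> t ht; rewrite /xec (HCid t ht)).
rewrite (integ_RInt exA) (integ_RInt exB) (integ_RInt exC) I0e I0b I1e HIeq.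
pose E t := (r0 (xec e t) - r0 (xbc t)) + e * (r1 (xec e t) - r0 (xec e t)) + Dfun t - e * Ifc t.
have cP1 : forall x, continuity_pt (fun t => r0 (xec e t) - r0 (xbc t)) x by move=> x; apply: cpt_minus.
have cP2 : forall x, continuity_pt (fun t => r1 (xec e t) - r0 (xec e t)) x by move=> x; apply: cpt_minus.
have cP3 : forall x, continuity_pt (fun t => e * (r1 (xec e t) - r0 (xec e t))) x by move=> x; apply: cpt_mult => //; exact: cpt_const.
have cP4 : forall x, continuity_pt (fun t => (r0 (xec e t) - r0 (xbc t)) + e * (r1 (xec e t) - r0 (xec e t))) x by move=> x; apply: cpt_plus.
have cP5 : forall x, continuity_pt (fun t => (r0 (xec e t) - r0 (xbc t)) + e * (r1 (xec e t) - r0 (xec e t)) + Dfun t) x by move=> x; apply: cpt_plus.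
have cP6 : forall x, continuity_pt (fun t => e * Ifc t) x by move=> x; apply: cpt_mult => //; exact: cpt_const.
have HEc : forall x, continuity_pt E x by move=> x; apply: cpt_minus.
have HRE : RInt E 0 T = (RInt (fun t => r0 (xec e t)) 0 T - RInt (fun t => r0 (xbc t)) 0 T)
   + e * (RInt (fun t => r1 (xec e t)) 0 T - RInt (fun t => r0 (xec e t)) 0 T) + RInt Dfun 0 T - e * RInt Ifc 0 T.
  rewrite /E (@RInt_sub (fun t => (r0 (xec e t) - r0 (xbc t)) + e * (r1 (xec e t) - r0 (xec e t)) + Dfun t) (fun t => e * Ifc t) 0 T (@ex_RInt_cont _ 0 T cP5) (@ex_RInt_cont _ 0 T cP6)).
  rewrite (@RInt_add (fun t => (r0 (xec e t) - r0 (xbc t)) + e * (r1 (xec e t) - r0 (xec e t))) Dfun 0 T (@ex_RInt_cont _ 0 T cP4) (@ex_RInt_cont _ 0 T HDc)).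
  rewrite (@RInt_add (fun t => (r0 (xec e t) - r0 (xbc t))) (fun t => e * (r1 (xec e t) - r0 (xec e t))) 0 T (@ex_RInt_cont _ 0 T cP1) (@ex_RInt_cont _ 0 T cP3)).
  rewrite (@RInt_sc (fun t => r1 (xec e t) - r0 (xec e t)) e 0 T (@ex_RInt_cont _ 0 T cP2)).
  rewrite (@RInt_sc Ifc e 0 T (@ex_RInt_cont _ 0 T HIc)).
  rewrite (@RInt_sub (fun t => r0 (xec e t)) (fun t => r0 (xbc t)) 0 T (@ex_RInt_cont _ 0 T Ha) (@ex_RInt_cont _ 0 T Hb)).
  rewrite (@RInt_sub (fun t => r1 (xec e t)) (fun t => r0 (xec e t)) 0 T (@ex_RInt_cont _ 0 T Hc1) (@ex_RInt_cont _ 0 T Ha)).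
  done.
have xeT : xe e T = xec e T by rewrite /xec CT.
have xbT : xbc T = xb T by rewrite /xbc CT.
have lamT : dot (lamc T) (vsub (xec e T) (xbc T)) = dot (Dq (xbc T)) (vsub (xec e T) (xbc T)).
  by rewrite /dot; apply: sum_ext => k; rewrite /lamc CT HlamT xbT.
pose Qrem := q (xec e T) - q (xbc T) - dot (Dq (xbc T)) (vsub (xec e T) (xbc T)).
have he0 : 0 < e by case: he.
have Hid : / e * ((1 - e) * (RInt (fun t => r0 (xec e t)) 0 T + q (xe e T)) +
      e * (RInt (fun t => r1 (xec e t)) 0 T + q (xe e T)) -
      (RInt (fun t => r0 (xbc t)) 0 T + q (xb T))) - RInt Ifc 0 T = / e * (Qrem + RInt E 0 T).
  rewrite HRE -Hadj lamT /Qrem xeT xbT; field; lra.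
rewrite Hid.
have HQ : Rabs Qrem <= eps1 * (Ks * e).
  have hvT := Hv T ltac:(lra).
  have hh : vnorm (vsub (xec e T) (xb T)) < rhoq by rewrite -xbT; lra.
  have := HRq _ hh; rewrite vadd_sub /Qrem xbT => h.
  eapply Rle_trans; first exact h.
  apply Rmult_le_compat_l; [lra| rewrite -xbT; exact hvT].
have HE : forall t, 0 <= t <= T -> Rabs (E t) <= eps1 * e * ((Ks + 1) * (1 + INR n * Lam)).
  move=> t ht.
  set v := vnorm (vsub (xec e t) (xbc t)).
  have hv := Hv t ht; rewrite -/v in hv.
  have hv0 : 0 <= v by exact: vnorm_ge0.
  have hvr : v < rhos by lra.
  set A1 := r0 (xec e t) - r0 (xbc t) - dot (Dr0 (xbc t)) (vsub (xec e t) (xbc t)).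
  set A2 := \big[Rplus/0]_(k<n) (lamc t k * (F0 (xec e t) k - F0 (xbc t) k - dot (DF0 (xbc t) k) (vsub (xec e t) (xbc t)))).
  set A3 := (r1 (xec e t) - r0 (xec e t)) - (r1 (xbc t) - r0 (xbc t)).
  set A4 := \big[Rplus/0]_(k<n) (lamc t k * ((F1 (xec e t) k - F0 (xec e t) k) - (F1 (xbc t) k - F0 (xbc t) k))).
  have eA4 : A4 = \big[Rplus/0]_(k<n) (lamc t k * (F1 (xec e t) k - F0 (xec e t) k)) - dot (vsub (F1 (xbc t)) (F0 (xbc t))) (lamc t).
    by rewrite /A4 /dot -sum_minus; apply: sum_ext => k; rewrite /vsub; ring.
  have eE : E t = A1 + A2 + e * A3 + e * A4.
    by rewrite eA4 /E /Dfun /Dfun_def /Ifc /A1 /A2 /A3; ring.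
  have b1 : Rabs A1 <= eps1 * v by apply: HRa => //; rewrite -/v; lra.
  have b2 : Rabs A2 <= INR n * (Lam * (eps1 * v)).
    eapply Rle_trans; first apply: sum_abs.
    apply: sum_le_const => k; rewrite Rabs_mult.
    apply Rmult_le_compat; [apply Rabs_pos|apply Rabs_pos|exact: HLam|].
    apply: HRb => //; rewrite -/v; lra.
  have b3 : Rabs A3 <= eps1 by left; apply: HRc => //; rewrite -/v; lra.
  have b4 : Rabs A4 <= INR n * (Lam * eps1).
    eapply Rle_trans; first apply: sum_abs.
    apply: sum_le_const => k; rewrite Rabs_mult.
    apply Rmult_le_compat; [apply Rabs_pos|apply Rabs_pos|exact: HLam|].
    left; apply: HRd => //; rewrite -/v; lra.
  rewrite eE.
  have t1 : Rabs (A1 + A2 + e * A3 + e * A4) <= Rabs A1 + Rabs A2 + e * Rabs A3 + e * Rabs A4.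
    have := Rabs_triang (A1 + A2 + e * A3) (e * A4).
    have := Rabs_triang (A1 + A2) (e * A3).
    have := Rabs_triang A1 A2.
    rewrite !Rabs_mult (Rabs_right e); last lra.
    lra.
  eapply Rle_trans; first exact t1.
  have hnL : 0 <= INR n * Lam by nra.
  have : eps1 * v * (1 + INR n * Lam) <= eps1 * (Ks * e) * (1 + INR n * Lam).
    apply Rmult_le_compat_r; [lra|]; apply Rmult_le_compat_l; lra.
  move=> h.
  have -> : eps1 * e * ((Ks + 1) * (1 + INR n * Lam)) = eps1 * (Ks * e) * (1 + INR n * Lam) + e * (eps1 * (1 + INR n * Lam)) by ring.
  have : Rabs A1 + Rabs A2 <= eps1 * v * (1 + INR n * Lam) by nra.
  have : e * Rabs A3 + e * Rabs A4 <= e * (eps1 * (1 + INR n * Lam)).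
    rewrite -Rmult_plus_distr_l; apply Rmult_le_compat_l; [lra| nra].
  lra.
have HRIE : Rabs (RInt E 0 T) <= (T - 0) * (eps1 * e * ((Ks + 1) * (1 + INR n * Lam))).
  apply: abs_RInt_le_const => //; exact: (@ex_RInt_cont _ 0 T HEc).
rewrite Rabs_mult Rabs_inv (Rabs_right e); last lra.
have Htot : Rabs (Qrem + RInt E 0 T) <= e * (eps1 * K2).
  eapply Rle_trans; [apply Rabs_triang|].
  have -> : e * (eps1 * K2) = eps1 * (Ks * e) + (T - 0) * (eps1 * e * ((Ks + 1) * (1 + INR n * Lam))) by rewrite /K2; ring.
  lra.
have hK : eps1 * K2 < eps.
  rewrite /eps1. have -> : eps / (K2 + 1) * K2 = eps * (K2 / (K2 + 1)) by field; lra.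
  have : K2 / (K2 + 1) < 1 by apply (Rmult_lt_reg_r (K2 + 1)); [lra|]; field_simplify; lra.
  move=> h; nra.
apply: (Rle_lt_trans _ (/ e * (e * (eps1 * K2)))).
  apply Rmult_le_compat_l; [left; apply Rinv_0_lt_compat; lra| exact Htot].
rewrite -Rmult_assoc Rinv_l; lra.
Qed.


Unset Implicit Arguments. Set Strict Implicit.


Lemma flip_add m (abar : 'I_m -> bool) (i : 'I_m) : abar i = false ->
  vadd (bctrl abar) (ebasis i) = bctrl (fun j => if j == i then ~~ abar i else abar j).
Proof.
move=> Hi; apply: functional_extensionality => j; rewrite /vadd /bctrl /ebasis.
case: (eqVneq j i) => [->|hne]; first by rewrite Hi /=; ring.
simpl; ring.
Qed.

Lemma flip_sub m (abar : 'I_m -> bool) (i : 'I_m) : abar i = true ->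
  vsub (bctrl abar) (ebasis i) = bctrl (fun j => if j == i then ~~ abar i else abar j).
Proof.
move=> Hi; apply: functional_extensionality => j; rewrite /vsub /bctrl /ebasis.
case: (eqVneq j i) => [->|hne]; first by rewrite Hi /=; ring.
simpl; ring.
Qed.

Theorem theorem1 (n m : nat) (T : R) (HT : 0 < T)
  (X : vec n -> Prop) (x0 : vec n) (Hx0 : X x0)
  (f : vec n -> vec m -> vec n) (r : vec n -> vec m -> R) (q : vec n -> R)
  (Df : vec n -> vec m -> 'I_n -> vec n)
  (D2f : vec n -> vec m -> 'I_n -> 'I_n -> vec n)
  (Dr : vec n -> vec m -> vec n) (Dq : vec n -> vec n)
  (A1 : forall a : 'I_m -> bool,
     C2_with (fun y => f y (bctrl a)) (fun y => Df y (bctrl a)) (fun y => D2f y (bctrl a))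
     /\ lipschitz_on X (fun y => f y (bctrl a)))
  (A3 : (forall a : 'I_m -> bool, C1_with (fun y => r y (bctrl a)) (fun y => Dr y (bctrl a)))
        /\ C1_with q Dq)
  (abar : 'I_m -> bool) (i : 'I_m)
  (xb : R -> vec n) (Hxb : ode_sol T (fun y => f y (bctrl abar)) x0 xb)
  (lam : R -> vec n)
  (Hlam : adjoint_sol T (fun y => Df y (bctrl abar)) (fun y => Dr y (bctrl abar)) Dq xb lam)
  (xe : R -> R -> vec n)
  (Hxe : forall e, 0 <= e <= 1 ->
     ode_sol T
       (fun y => vadd (vscale (1 - e) (f y (bctrl abar)))
                      (vscale e (f y (if abar i then vsub (bctrl abar) (ebasis i)
                                                else vadd (bctrl abar) (ebasis i)))))
       x0 (xe e)) :
  (abar i = false ->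
     let a1 := vadd (bctrl abar) (ebasis i) in
     limit1_in
       (fun e => / e * ((1 - e) * Jfun T r q (xe e) (bctrl abar) + e * Jfun T r q (xe e) a1
                        - Jfun T r q xb (bctrl abar)))
       (fun e => 0 < e <= 1)
       (integ (fun t => dot (vsub (f (xb t) a1) (f (xb t) (bctrl abar))) (lam t)
                        + r (xb t) a1 - r (xb t) (bctrl abar)) 0 T)
       0)
  /\
  (abar i = true ->
     let a0 := vsub (bctrl abar) (ebasis i) in
     limit1_in
       (fun e => / e * (Jfun T r q xb (bctrl abar)
                        - ((1 - e) * Jfun T r q (xe e) (bctrl abar) + e * Jfun T r q (xe e) a0)))
       (fun e => 0 < e <= 1)
       (integ (fun t => dot (vsub (f (xb t) (bctrl abar)) (f (xb t) a0)) (lam t)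
                        + r (xb t) (bctrl abar) - r (xb t) a0) 0 T)
       0).
Proof.
pose a' := fun j => if j == i then ~~ abar i else abar j.
have [[HF0 [HDF0 _]] _] := A1 abar.
have [[HF1 _] _] := A1 a'.
have [HrA [Hq _]] := A3.
have [Hr0 HDr0] := HrA abar.
have [Hr1 _] := HrA a'.
have HDF0c : forall y k j, vcont (fun y => Df y (bctrl abar) k j) y.
  by move=> y k j; apply: fdiff_vcont; exact: HDF0.
have HF1c : forall y k, vcont (fun y => f y (bctrl a') k) y.
  by move=> y k; apply: fdiff_vcont; exact: HF1.
have Hr1c : forall y, vcont (fun y => r y (bctrl a')) y.
  by move=> y; apply: fdiff_vcont; exact: Hr1.
have Hxe' : forall e, 0 < e <= 1 -> ode_sol T (fun y => vadd (vscale (1 - e) (f y (bctrl abar))) (vscale e (f y (bctrl a')))) x0 (xe e).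
  move=> e he; have := Hxe e ltac:(lra).
  case Hi : (abar i).
  - by rewrite flip_sub.
  - by rewrite flip_add.
have [Hex Hlim] := @main_lemma n T (fun y => f y (bctrl abar)) (fun y => f y (bctrl a'))
   (fun y => Df y (bctrl abar)) (fun y => r y (bctrl abar)) (fun y => r y (bctrl a'))
   (fun y => Dr y (bctrl abar)) q Dq x0 xb lam xe HT HF0 HDF0c HF1c Hr0 HDr0 Hr1c (Hq (xb T)) Hxb Hlam Hxe'.
split.
- move=> Hi /=; rewrite flip_add // -/a'.
  rewrite (integ_RInt Hex).
  move=> eps Heps; have [alp [Halp Hl]] := Hlim eps Heps.
  exists (Rmin alp 1); split; first by apply: Rmin_pos; lra.
  move=> e [he hd]; simpl in hd; rewrite /Rdist Rminus_0_r in hd.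
  simpl; rewrite /Rdist.
  have hea : e < alp by rewrite Rabs_right in hd; [eapply Rlt_le_trans; [exact hd| apply Rmin_l]|lra].
  exact: Hl.
- move=> Hi /=; rewrite flip_sub // -/a'.
  set Ifun := fun t => dot (vsub (f (xb t) (bctrl a')) (f (xb t) (bctrl abar))) (lam t) + r (xb t) (bctrl a') - r (xb t) (bctrl abar).
  have Hg : (fun t => dot (vsub (f (xb t) (bctrl abar)) (f (xb t) (bctrl a'))) (lam t) + r (xb t) (bctrl abar) - r (xb t) (bctrl a'))
      = fun t => opp (Ifun t).
    apply: functional_extensionality => t; rewrite /Ifun /opp /= !dot_sub_l; ring.
  rewrite Hg (integ_RInt (ex_RInt_opp _ _ _ Hex)) (RInt_opp _ _ _ Hex).
  move=> eps Heps; have [alp [Halp Hl]] := Hlim eps Heps.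
  exists (Rmin alp 1); split; first by apply: Rmin_pos; lra.
  move=> e [he hd]; simpl in hd; rewrite /Rdist Rminus_0_r in hd.
  simpl; rewrite /Rdist.
  have hea : e < alp by rewrite Rabs_right in hd; [eapply Rlt_le_trans; [exact hd| apply Rmin_l]|lra].
  have := Hl e he hea.
  rewrite /opp /= /Jfun.
  move=> h; rewrite -Rabs_Ropp; match goal with |- Rabs ?a < _ => match type of h with Rabs ?b < _ => have -> : a = b by ring end end.
  exact h.
Qed.
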